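(* Let $R$ be any binary relation on $U$. Then $(\mathcal J_p(\wp(U)^{\vartriangle}),\subseteq)\cong(\mathcal J_p(\wp(U)^{\blacktriangle}),\supseteq)$. More precisely, the map $\varphi\colon R(x)\mapsto\breve R(w_x)$, where $w_x$ is any element of $\mathfrak{core}R(x)$, is a well-defined bijection $\mathcal J_p(\wp(U)^{\vartriangle})\to\mathcal J_p(\wp(U)^{\blacktriangle})$ which reverses inclusion, and its inverse is $\breve R(y)\mapsto R(w_y)$ with $w_y$ any element of $\mathfrak{core}\breve R(y)$, also inclusion-reversing.
   Context: Let $U$ be a set and $R\subseteq U\times U$ a binary relation. For $x\in U$, $R(x)=\{y\in U\mid (x,y)\in R\}$ and $\breve R(x)=\{y\in U\mid (y,x)\in R\}$. $\mathfrak{core}R(x)=\{w\in R(x)\mid \text{for all }y\in U,\ w\in R(y)\text{ implies }R(x)\subseteq R(y)\}$, and $\mathfrak{core}\breve R(x)$ is defined likewise with $\breve R$ in place of $R$. For $X\subseteq U$: $X^{\blacktriangle}=\{x\in U\mid R(x)\cap X\neq\emptyset\}$ and $X^{\vartriangle}=\{x\in U\mid \breve R(x)\cap X\neq\emptyset\}$, so $\{x\}^{\vartriangle}=R(x)$, $\{x\}^{\blacktriangle}=\breve R(x)$. $\wp(U)^{\blacktriangle}=\{X^{\blacktriangle}\mid X\subseteq U\}$, $\wp(U)^{\vartriangle}=\{X^{\vartriangle}\mid X\subseteq U\}$, complete lattices under $\subseteq$ with joins given by unions. An element $p$ of a complete lattice $L$ is completely join-prime if $p\le\bigvee X$ implies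 $p\le x$ for some $x\in X$, for every $X\subseteq L$; $\mathcal J_p(L)$ denotes the set of completely join-prime elements. *)

(* Defs.v *)
Set Implicit Arguments.

Section Defs.
Variables (U : Type) (R : U -> U -> Prop).

Definition subset (A B : U -> Prop) : Prop := forall z, A z -> B z.

Definition Rimg (x : U) : U -> Prop := fun y => R x y.
Definition Rinv (x : U) : U -> Prop := fun y => R y x.

Definition coreR (x : U) : U -> Prop :=
  fun w => Rimg x w /\ forall y, Rimg y w -> subset (Rimg x) (Rimg y).
Definition coreRinv (x : U) : U -> Prop :=
  fun w => Rinv x w /\ forall y, Rinv y w -> subset (Rinv x) (Rinv y).

Definition upB (X : U -> Prop) : U -> Prop :=
  fun x => exists y, Rimg x y /\ X y.
Definition upT (X : U -> Prop) : U -> Prop :=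
  fun x => exists y, Rinv x y /\ X y.

Definition famB (A : U -> Prop) : Prop := exists X, A = upB X.
Definition famT (A : U -> Prop) : Prop := exists X, A = upT X.
End Defs.

Definition bigU (U : Type) (S : (U -> Prop) -> Prop) : U -> Prop :=
  fun z => exists A, S A /\ A z.

(* completely join-prime elements of a family F of sets, ordered by inclusion,
   whose joins are unions *)
Definition cjp (U : Type) (F : (U -> Prop) -> Prop) (P : U -> Prop) : Prop :=
  F P /\ forall S : (U -> Prop) -> Prop,
    (forall A, S A -> F A) -> subset P (bigU S) -> exists A, S A /\ subset P A.

(* Main.v *)
Require Import Defs.
From Stdlib Require Import Classical FunctionalExtensionality PropExtensionality.
Set Implicit Arguments.

Lemma pred_ext (U : Type) (A B : U -> Prop) : (forall z, A z <-> B z) -> A = B.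
Proof. intro H; apply functional_extensionality; intro z; apply propositional_extensionality; auto. Qed.

Definition phiT (U : Type) (R : U -> U -> Prop) (P : U -> Prop) : U -> Prop :=
  fun y => subset P (Rimg R y).

Definition flipR (U : Type) (R : U -> U -> Prop) : U -> U -> Prop := fun a b => R b a.

Lemma Rimg_famT (U : Type) (R : U -> U -> Prop) y : famT R (Rimg R y).
Proof.
  exists (fun z => z = y). apply pred_ext; intro z; unfold upT, Rinv, Rimg; split.
  - intro H; exists y; auto.
  - intros [y' [H ->]]; auto.
Qed.

Lemma L1 (U : Type) (R : U -> U -> Prop) P :
  cjp (famT R) P -> exists x w, P = Rimg R x /\ coreR R x w.
Proof.
  intros [[X ->] H].
  destruct (H (fun A => exists y, X y /\ A = Rimg R y)) as [A [[y [Xy ->]] Hs]].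
  - intros A [y [_ ->]]; apply Rimg_famT.
  - intros z [y [Ryz Xy]]. exists (Rimg R y); split; [exists y; auto | exact Ryz].
  - assert (E : upT R X = Rimg R y).
    { apply pred_ext; intro z; split; [apply Hs|]. intro Hz; exists y; split; auto. }
    rewrite E in *. exists y.
    apply NNPP; intro Hn.
    destruct (H (fun A => exists y', A = Rimg R y' /\ ~ subset (Rimg R y) (Rimg R y')))
      as [A [[y' [-> Hns]] Hs']].
    + intros A [y' [-> _]]; apply Rimg_famT.
    + intros z Hz.
      assert (Hc : ~ coreR R y z) by (intro Hc; apply Hn; exists z; auto).
      unfold coreR in Hc.
      assert (Hc2 : ~ forall y', Rimg R y' z -> subset (Rimg R y) (Rimg R y')) by tauto.
      apply not_all_ex_not in Hc2. destruct Hc2 as [y' Hy'].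
      exists (Rimg R y'); split.
      * exists y'; split; auto.
      * apply NNPP; intro Hr; apply Hy'; intro Hr'; contradiction.
    + contradiction.
Qed.

Lemma L2 (U : Type) (R : U -> U -> Prop) x w :
  coreR R x w -> cjp (famT R) (Rimg R x).
Proof.
  intros [Hw Hc]; split; [apply Rimg_famT|].
  intros S HS Hsub.
  destruct (Hsub w Hw) as [A [SA Aw]].
  exists A; split; auto.
  destruct (HS A SA) as [X ->].
  destruct Aw as [y [Ryw Xy]].
  intros z Hz. exists y; split; auto. apply (Hc y Ryw z Hz).
Qed.

Lemma L3 (U : Type) (R : U -> U -> Prop) x w :
  coreR R x w -> phiT R (Rimg R x) = Rinv R w.
Proof.
  intros [Hw Hc]; apply pred_ext; intro y; unfold phiT, Rinv; split.
  - intro H; apply H; exact Hw.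
  - intro H; apply Hc; exact H.
Qed.

Lemma L4 (U : Type) (R : U -> U -> Prop) x w :
  coreR R x w -> coreR (flipR R) w x.
Proof.
  intros [Hw Hc]; split.
  - exact Hw.
  - intros y Hy z Hz. unfold Rimg, flipR in *. apply (Hc z Hz y Hy).
Qed.

Lemma L5 (U : Type) (R : U -> U -> Prop) P :
  cjp (famT R) P -> cjp (famT (flipR R)) (phiT R P) /\ phiT (flipR R) (phiT R P) = P.
Proof.
  intro H. destruct (L1 H) as [x [w [-> Hc]]].
  rewrite (L3 Hc). pose proof (L4 Hc) as Hc'. split.
  - exact (L2 Hc').
  - exact (L3 Hc').
Qed.

Lemma L6 (U : Type) (R : U -> U -> Prop) P P' :
  cjp (famT R) P -> cjp (famT R) P' ->
  (subset P P' <-> subset (phiT R P') (phiT R P)).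
Proof.
  intros _ H'. destruct (L1 H') as [x' [w' [-> _]]]. split.
  - intros H y Hy z Hz. apply Hy, H, Hz.
  - intro H. apply (H x'). intros z Hz; exact Hz.
Qed.

Theorem mainTheorem9 (U : Type) (R : U -> U -> Prop) :
  (forall P, cjp (famT R) P -> exists x w, P = Rimg R x /\ coreR R x w) /\
  (forall Q, cjp (famB R) Q -> exists y w, Q = Rinv R y /\ coreRinv R y w) /\
  exists phi psi : (U -> Prop) -> (U -> Prop),
    (forall x w, cjp (famT R) (Rimg R x) -> coreR R x w ->
       phi (Rimg R x) = Rinv R w) /\
    (forall y w, cjp (famB R) (Rinv R y) -> coreRinv R y w ->
       psi (Rinv R y) = Rimg R w) /\
    (forall P, cjp (famT R) P -> cjp (famB R) (phi P)) /\
    (forall Q, cjp (famB R) Q -> cjp (famT R) (psi Q)) /\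
    (forall P, cjp (famT R) P -> psi (phi P) = P) /\
    (forall Q, cjp (famB R) Q -> phi (psi Q) = Q) /\
    (forall P P', cjp (famT R) P -> cjp (famT R) P' ->
       (subset P P' <-> subset (phi P') (phi P))) /\
    (forall Q Q', cjp (famB R) Q -> cjp (famB R) Q' ->
       (subset Q Q' <-> subset (psi Q') (psi Q))).
Proof.
  split; [exact (@L1 U R)|].
  split; [exact (@L1 U (flipR R))|].
  exists (phiT R), (phiT (flipR R)).
  split; [intros x w _ Hc; exact (L3 Hc)|].
  split; [intros y w _ Hc; exact (@L3 U (flipR R) y w Hc)|].
  split; [intros P H; exact (proj1 (L5 H))|].
  split; [intros Q H; exact (proj1 (@L5 U (flipR R) Q H))|].
  split; [intros P H; exact (proj2 (L5 H))|].
  split; [intros Q H; exact (proj2 (@L5 U (flipR R) Q H))|].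
  split; [intros P P' H H'; exact (L6 H H')|].
  intros Q Q' H H'; exact (@L6 U (flipR R) Q Q' H H').
Qed.
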